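(* If $(S,K,I)$ is a split graph and $C$ is an induced cycle in the factor graph $\Phi(S)$, then $|C|\neq 5$.
   Context: A split graph $(S,K,I)$ is a graph $S$ together with a fixed partition $V(S)=K\dot\cup I$, where $K$ is a clique and $I$ is an independent set. For a vertex $v$ of $S$, $N_v$ denotes its open neighborhood in $S$ and $d_v=|N_v|$; $\eta_{uv}=|N_u\cap N_v|$. The factor graph $\Phi(S)$ is the loopless multigraph with vertex set $I$ in which, for distinct $u,v\in I$, there is one edge joining $u$ and $v$ for each 2-switch of $S$ acting on $u$ and $v$ (a 2-switch replaces edges $ab,cd$ with $ac,bd$ when $ab,cd\in E(S)$ and $ac,bd\notin E(S)$); equivalently, the multiplicity of $uv$ is $\sigma_{uv}=(d_u-\eta_{uv})(d_v-\eta_{uv})$, and $u,v$ are adjacent iff $\sigma_{uv}>0$. An induced cycle $C=v_1\ldots v_nv_1$ ($n\geq 3$) in $\Phi(S)$ consists of distinct vertices with $v_iv_{i+1}$ and $v_nv_1$ adjacent and no other pair adjacent (multiplicities ignored); $|C|=n$. *)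

(* Defs.v *)
From mathcomp Require Import all_boot.
Set Implicit Arguments. Unset Strict Implicit. Unset Printing Implicit Defensive.

Definition simple_graph (V : finType) (e : rel V) : Prop :=
  symmetric e /\ irreflexive e.

Definition split_graph (V : finType) (e : rel V) (K I : {set V}) : Prop :=
  [/\ simple_graph e,
      K :&: I = set0,
      K :|: I = [set: V],
      (forall x y, x \in K -> y \in K -> x != y -> e x y)
    & (forall x y, x \in I -> y \in I -> ~~ e x y)].

Definition nbhd (V : finType) (e : rel V) (v : V) : {set V} := [set w | e v w].
Definition deg (V : finType) (e : rel V) (v : V) : nat := #|nbhd e v|.
Definition eta (V : finType) (e : rel V) (u v : V) : nat := #|nbhd e u :&: nbhd e v|.

(* multiplicity of the edge uv of the factor graph: sigma_uv = (d_u - eta)(d_v - eta) *)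
Definition sigma (V : finType) (e : rel V) (u v : V) : nat :=
  (deg e u - eta e u v) * (deg e v - eta e u v).

Definition phi_adj (V : finType) (e : rel V) (I : {set V}) (u v : V) : bool :=
  [&& u \in I, v \in I, u != v & 0 < sigma e u v].

Definition induced_cycle (V : finType) (e : rel V) (I : {set V}) (c : seq V) : Prop :=
  let n := size c in
  [/\ 3 <= n, uniq c, {subset c <= I} &
      forall x0 i j, i < n -> j < n ->
        phi_adj e I (nth x0 c i) (nth x0 c j) =
          ((j == i.+1 %% n) || (i == j.+1 %% n))].

(* Main.v *)
Require Import Defs.
From mathcomp Require Import all_boot.

Lemma pos_sub (T : finType) (A B : {set T}) :
  (0 < #|A| - #|A :&: B|) = ~~ (A \subset B).
Proof.
rewrite subn_gt0.
have [le eq] := subset_leqif_cards (subsetIl A B).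
rewrite ltn_neqAle le andbT eq.
by rewrite -(sameP setIidPl eqP).
Qed.

Lemma sigma_pos (V : finType) (e : rel V) u v :
  (0 < sigma e u v) = ~~ (nbhd e u \subset nbhd e v) && ~~ (nbhd e v \subset nbhd e u).
Proof.
rewrite /sigma muln_gt0 /eta /deg pos_sub setIC pos_sub //.
Qed.

Lemma no_c5 (T : finType) (A0 A1 A2 A3 A4 : {set T}) :
  ~~ (A0 \subset A1) -> ~~ (A1 \subset A0) ->
  ~~ (A1 \subset A2) -> ~~ (A2 \subset A1) ->
  ~~ (A2 \subset A3) -> ~~ (A3 \subset A2) ->
  ~~ (A3 \subset A4) -> ~~ (A4 \subset A3) ->
  ~~ (A4 \subset A0) -> ~~ (A0 \subset A4) ->
  (A0 \subset A2) || (A2 \subset A0) ->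
  (A1 \subset A3) || (A3 \subset A1) ->
  (A2 \subset A4) || (A4 \subset A2) ->
  (A3 \subset A0) || (A0 \subset A3) ->
  (A4 \subset A1) || (A1 \subset A4) -> False.
Proof.
move=> n01 n10 n12 n21 n23 n32 n34 n43 n40 n04.
move=> /orP[h1|h1] /orP[h2|h2] /orP[h3|h3] /orP[h4|h4] /orP[h5|h5];
match goal with
| H1 : is_true (?x \subset ?y), H2 : is_true (?y \subset ?z),
  N : is_true (~~ (?x \subset ?z)) |- _ => by rewrite (subset_trans H1 H2) in N
end.
Qed.

Theorem lemma3p2 (V : finType) (e : rel V) (K I : {set V}) (c : seq V) :
  split_graph e K I -> induced_cycle e I c -> size c <> 5.
Proof.
move=> _ [_ Hu Hs H] Hc.
case: c Hc Hu Hs H => [|a0 [|a1 [|a2 [|a3 [|a4 [|? ?]]]]]] //= _ Hu Hs H.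
have HI : forall x, x \in [:: a0; a1; a2; a3; a4] -> x \in I by move=> x /Hs.
have P := H a0.
move: (P 0 1 isT isT) (P 1 2 isT isT) (P 2 3 isT isT) (P 3 4 isT isT) (P 4 0 isT isT).
move: (P 0 2 isT isT) (P 1 3 isT isT) (P 2 4 isT isT) (P 3 0 isT isT) (P 4 1 isT isT).
rewrite /phi_adj /= !sigma_pos.
rewrite !HI ?inE ?eqxx ?orbT //=.
move: Hu; rewrite /= !inE !negb_or.
move=> /and5P[/and4P[n01 n02 n03 n04] /and3P[n12 n13 n14] /andP[n23 n24] n34 _].
rewrite n02 n13 n24 (eq_sym a3) n03 (eq_sym a4) n14 /=.
move=> /negbT; rewrite negb_and !negbK => c02.
move=> /negbT; rewrite negb_and !negbK => c13.
move=> /negbT; rewrite negb_and !negbK => c24.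
move=> /negbT; rewrite negb_and !negbK => c30.
move=> /negbT; rewrite negb_and !negbK => c41.
move=> /and3P[_ x01 x10] /and3P[_ x12 x21] /and3P[_ x23 x32] /and3P[_ x34 x43] /and3P[_ x40 x04].

exact: (@no_c5 _ _ _ _ _ _ x01 x10 x12 x21 x23 x32 x34 x43 x40 x04 c02 c13 c24 c30 c41).
Qed.
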